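(* Suppose $f$ satisfies the separation property. Let $x\in\widetilde X$ with itinerary $\theta$, $t\geqslant 0$, $n\geqslant 1$. If $f^{t+n}(x)\in A_{i_1i_2\dots i_n}$ for some atom $A_{i_1\dots i_n}$, then $\theta_t\theta_{t+1}\dots\theta_{t+n-1}=i_1i_2\dots i_n$.
   Context: Let $(X,d)$ be a compact metric space, $X_1,\dots,X_N$ ($N\geqslant 2$) non-empty pairwise disjoint open subsets with $X=\bigcup_i\overline{X_i}$, $\Delta:=\{x\in\overline{X_i}\cap\overline{X_j}:i\neq j\}$, and $f:X\to X$ a map such that each $f|_{X_i}$ admits a continuous extension $f_i:\overline{X_i}\to X$. Separation property: each $f_i$ injective and $f_i(\overline{X_i})\cap f_j(\overline{X_j})=\emptyset$ for $i\neq j$. $\widetilde X:=\bigcap_{n\geqslant 0}f^{-n}(X\setminus\Delta)$; the itinerary of $x\in\widetilde X$ is $\theta$ with $\theta_t=i$ iff $f^t(x)\in X_i$. For $A\subset X$ let $F_i(A):=\overline{f(A\cap X_i)}$; $A_{i_1\dots i_n}:=F_{i_n}\circ\dots\circ F_{i_1}(X)$ is an atom of generation $n$ if non-empty. *)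

(* Defs.v *)
From HB Require Import structures.
From mathcomp Require Import all_boot all_order all_algebra.
From mathcomp Require Import all_classical all_reals all_analysis.
Set Implicit Arguments. Unset Strict Implicit. Unset Printing Implicit Defensive.
Import Order.TTheory GRing.Theory Num.Theory.
Local Open Scope classical_set_scope.

Section PiecewiseDefs.
Context {T : topologicalType} {N : nat}.
Variables (Xs : 'I_N -> set T) (f : T -> T).

Definition Delta : set T :=
  [set x | exists i j : 'I_N, i != j /\ closure (Xs i) x /\ closure (Xs j) x].

Definition Xtilde : set T := [set x | forall n : nat, ~ Delta (iter n f x)].

Definition is_itinerary (x : T) (theta : nat -> 'I_N) : Prop :=
  forall (t : nat) (i : 'I_N), theta t = i <-> Xs i (iter t f x).

Definition Fmap (i : 'I_N) (A : set T) : set T := closure (f @` (A `&` Xs i)).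

(* A_{i_1 ... i_n} = F_{i_n} o ... o F_{i_1} (X), for s = [:: i_1; ...; i_n] *)
Definition atom_set (s : seq 'I_N) : set T := foldl (fun A i => Fmap i A) setT s.

Definition is_cont_ext (i : 'I_N) (fi : T -> T) : Prop :=
  {within closure (Xs i), continuous fi} /\ (forall x, Xs i x -> fi x = f x).

Definition separation_property (fe : 'I_N -> T -> T) : Prop :=
  (forall i : 'I_N, {in closure (Xs i) &, injective (fe i)}) /\
  (forall i j : 'I_N, i != j -> fe i @` closure (Xs i) `&` fe j @` closure (Xs j) = set0).

End PiecewiseDefs.

(* Main.v *)
Require Import Defs.
From HB Require Import structures.
From mathcomp Require Import all_boot all_order all_algebra.
From mathcomp Require Import all_classical all_reals all_analysis.
Import Order.TTheory GRing.Theory Num.Theory.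
Local Open Scope classical_set_scope.

Lemma step_lemma (T : topologicalType) (N : nat)
  (Xs : 'I_N -> set T) (f : T -> T) (fe : 'I_N -> T -> T)
  (hT : hausdorff_space T) (hcpt : compact [set: T])
  (hext : forall i, is_cont_ext Xs f i (fe i))
  (hsep : separation_property Xs fe)
  (i j : 'I_N) (A : set T) (hA : closed A) (w : T) (hw : Xs j w)
  (hin : Fmap Xs f i A (f w)) : i = j /\ A w.
Proof.
set C := fe i @` (A `&` closure (Xs i)).
have Cc : closed C.
  apply: compact_closed => //; apply: continuous_compact.
    apply: continuous_subspaceW (hext i).1; by move=> z [].
  apply: (subclosed_compact _ hcpt) => //; apply: closedI => //; exact: closed_closure.
have sub : f @` (A `&` Xs i) `<=` C.
  move=> _ [z [Az Xz] <-]; exists z; first by split => //; exact: subset_closure.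
  by rewrite (hext i).2.
have : C (f w).
  rewrite (closure_id C).1 //; exact: (closureS sub).
case=> z [Az cz] ez.
have fw : f w = fe j w by rewrite (hext j).2.
have eij : i = j.
  apply/eqP; apply/negP => /negP nij.
  have := hsep.2 i j nij; rewrite -subset0 => /(_ (f w)); apply.
  split; first by exists z.
  by exists w; [exact: subset_closure | rewrite fw].
split => //; subst j.
have -> : w = z; last by [].
apply: (hsep.1 i); rewrite ?inE //; first exact: subset_closure.
by rewrite ez fw.
Qed.

Lemma atom_closed (T : topologicalType) (N : nat)
  (Xs : 'I_N -> set T) (f : T -> T) (s : seq 'I_N) : closed (atom_set Xs f s).
Proof.
case/lastP: s => [|s i]; first exact: closedT.
rewrite /atom_set foldl_rcons; exact: closed_closure.
Qed.

Theorem lemma3 (R : realType) (T : pseudoMetricType R) (N : nat)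
  (Xs : 'I_N -> set T) (f : T -> T) (fe : 'I_N -> T -> T)
  (hT : hausdorff_space T) (hcpt : compact [set: T])
  (hN : (2 <= N)%N)
  (hopen : forall i, open (Xs i))
  (hne : forall i, Xs i !=set0)
  (hdisj : forall i j, i != j -> Xs i `&` Xs j = set0)
  (hcover : \bigcup_(i in [set: 'I_N]) closure (Xs i) = [set: T])
  (hext : forall i, is_cont_ext Xs f i (fe i))
  (hsep : separation_property Xs fe)
  (x : T) (hx : Xtilde Xs f x)
  (theta : nat -> 'I_N) (htheta : is_itinerary Xs f x theta)
  (t n : nat) (hn : (1 <= n)%N)
  (s : seq 'I_N) (hs : size s = n)
  (hin : atom_set Xs f s (iter (t + n) f x)) :
  [seq theta (t + k)%N | k <- iota 0 n] = s.
Proof.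
subst n; clear hn.
elim/last_ind: s hin => [|s i IH] hin; first by [].
rewrite size_rcons addnS /= in hin.
rewrite /atom_set foldl_rcons in hin.
have hX : Xs (theta (t + size s)%N) (iter (t + size s) f x).
  exact: (htheta _ _).1.
have [ei hA] := @step_lemma _ _ Xs f fe hT hcpt hext hsep _ _ _ (@atom_closed _ _ Xs f s) _ hX hin.
rewrite size_rcons -addn1 iotaD map_cat (IH hA) /= add0n ei.
by rewrite cats1.
Qed.
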